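(* Let $A, B, K, L, F \in \mathbb{R}^{n\times n}$ with $B$ and $L$ non-singular, and suppose $$\sigma_{\min}(KL^{-1})\,\sigma_{\min}(B^{-1}A) > 1.$$ Then the Sylvester-like absolute value equation $$AXK + B\lvert X\rvert L = F$$ has exactly one solution $X \in \mathbb{R}^{n\times n}$.
   Context: $\sigma_{\min}(\cdot)$ is the smallest singular value and $\lvert X\rvert$ the entrywise absolute value of a matrix $X$. *)

(* Defs.v *)
From HB Require Import structures.
From mathcomp Require Import all_boot all_order all_algebra.
From mathcomp Require Import classical_sets reals.
Set Implicit Arguments. Unset Strict Implicit. Unset Printing Implicit Defensive.
Import Order.TTheory GRing.Theory Num.Theory.
Local Open Scope ring_scope.

Definition absmx (R : realType) (m n : nat) (X : 'M[R]_(m, n)) : 'M[R]_(m, n) :=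
  \matrix_(i, j) `|X i j|.

(* Smallest singular value: sigma_min(M) = sqrt(lambda_min(M^T M)),
   lambda_min being the least eigenvalue of the symmetric PSD matrix M^T M
   (all its eigenvalues are real). *)
Definition sigma_min (R : realType) (n : nat) (M : 'M[R]_n) : R :=
  Num.sqrt (inf [set l : R | eigenvalue (M^T *m M) l]%classic).

(* Main.v *)
From HB Require Import structures.
From mathcomp Require Import all_boot all_order all_algebra.
From mathcomp Require Import classical_sets reals.
From mathcomp Require Import boolp functions topology normedtype sequences derive.
From mathcomp Require Import ring lra interval_inference.
Require Import Defs.
Set Implicit Arguments. Unset Strict Implicit. Unset Printing Implicit Defensive.
Import Order.TTheory GRing.Theory Num.Theory.
Import numFieldTopology.Exports numFieldNormedType.Exports.
Local Open Scope ring_scope.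

Section Helpers.
Variable R : realType.

Definition sqn m n (X : 'M[R]_(m, n)) : R := \sum_i \sum_j X i j ^+ 2.

Lemma sqn_ge0 m n (X : 'M[R]_(m, n)) : 0 <= sqn X.
Proof. by apply: sumr_ge0 => i _; apply: sumr_ge0 => j _; exact: sqr_ge0. Qed.

Lemma sqn_eq0 m n (X : 'M[R]_(m, n)) : sqn X = 0 -> X = 0.
Proof.
move=> h; apply/matrixP => i j; rewrite mxE.
have h1 := @psumr_eq0P _ _ xpredT (fun i => \sum_j X i j ^+ 2) (fun i _ => sumr_ge0 _ (fun j _ => sqr_ge0 (X i j))) h.
have h2 := @psumr_eq0P _ _ xpredT (fun j => X i j ^+ 2) (fun j _ => sqr_ge0 (X i j)) (h1 i isT) j isT.
by apply/eqP; rewrite -sqrf_eq0 h2.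
Qed.

Lemma sqn0 m n : sqn (0 : 'M[R]_(m, n)) = 0.
Proof. by rewrite /sqn big1 // => i _; rewrite big1 // => j _; rewrite mxE expr0n. Qed.

Lemma sqnZ m n a (X : 'M[R]_(m, n)) : sqn (a *: X) = a ^+ 2 * sqn X.
Proof.
rewrite /sqn mulr_sumr; apply: eq_bigr => i _; rewrite mulr_sumr.
by apply: eq_bigr => j _; rewrite mxE exprMn.
Qed.

Lemma sqn_tr m n (X : 'M[R]_(m, n)) : sqn X^T = sqn X.
Proof. by rewrite /sqn exchange_big; apply: eq_bigr => i _; apply: eq_bigr => j _; rewrite mxE. Qed.

Lemma sqn_rows m n (X : 'M[R]_(m, n)) : sqn X = \sum_i sqn (row i X).
Proof.
apply: eq_bigr => i _; rewrite /sqn big_ord1; apply: eq_bigr => j _; by rewrite mxE.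
Qed.

Lemma sqn_absB m n (X Y : 'M[R]_(m, n)) :
  sqn (absmx X - absmx Y) <= sqn (X - Y).
Proof.
apply: ler_sum => i _; apply: ler_sum => j _; rewrite !mxE.
rewrite -[_ ^+ 2]real_normK ?num_real // -[(X i j - Y i j) ^+ 2]real_normK ?num_real //.
by rewrite ler_sqr ?nnegrE // ler_dist_dist.
Qed.

Definition ip k (u w : 'rV[R]_k) : R := \sum_j u 0 j * w 0 j.

Lemma sqn_ip k (u : 'rV[R]_k) : sqn u = ip u u.
Proof. by rewrite /sqn big_ord1; apply: eq_bigr => j _; rewrite expr2. Qed.

Lemma ipC k (u w : 'rV[R]_k) : ip u w = ip w u.
Proof. by apply: eq_bigr => j _; rewrite mulrC. Qed.

Lemma ipDZl k (u v w : 'rV[R]_k) t : ip (u + t *: v) w = ip u w + t * ip v w.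
Proof.
rewrite /ip mulr_sumr -big_split; apply: eq_bigr => j _; rewrite !mxE /=; ring.
Qed.

Lemma ipB k (u v w : 'rV[R]_k) : ip (u - v) w = ip u w - ip v w.
Proof.
rewrite /ip -sumrB; apply: eq_bigr => j _; rewrite !mxE; ring.
Qed.

Lemma ipZ k (u w : 'rV[R]_k) t : ip (t *: u) w = t * ip u w.
Proof.
rewrite /ip mulr_sumr; apply: eq_bigr => j _; rewrite !mxE; ring.
Qed.

Lemma ip_mul k l (u : 'rV[R]_k) (w : 'rV[R]_l) (M : 'M[R]_(l, k)) :
  ip u (w *m M) = ip (u *m M^T) w.
Proof.
rewrite /ip; under eq_bigr do rewrite mxE mulr_sumr.
rewrite exchange_big; apply: eq_bigr => j _; rewrite mxE mulr_suml.
by apply: eq_bigr => i _; rewrite mxE; ring.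
Qed.

Lemma ip_delta k (u : 'rV[R]_k) j : ip u (\row_l (l == j)%:R) = u 0 j.
Proof.
rewrite /ip (bigD1 j) //= big1 => [|l /negbTE lj]; rewrite mxE ?lj ?mulr0 //.
by rewrite eqxx mulr1 addr0.
Qed.


Lemma quad0 (b c : R) : (forall t, 0 <= 2 * t * b + t ^+ 2 * c) -> b = 0.
Proof.
move=> H; set d := `|c| + 1.
have d0 : 0 < d by rewrite /d ltr_pwDr // normr_ge0.
have cd : c < 2 * d by rewrite /d; have := ler_norm c; have := normr_ge0 c; lra.
set e := b / d.
have be : b = e * d by rewrite /e mulfVK // gt_eqF.
have := H (- e); rewrite be => h.
have e0 : e ^+ 2 <= 0 by nra.
have : e ^+ 2 = 0 by apply/eqP; rewrite eq_le e0 sqr_ge0.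
by move/eqP; rewrite sqrf_eq0 => /eqP ->; rewrite mul0r.
Qed.

Lemma ip_sq k (a b : 'rV[R]_k) t :
  ip (a + t *: b) (a + t *: b) = ip a a + 2 * t * ip a b + t ^+ 2 * ip b b.
Proof.
rewrite /ip !mulr_sumr -!big_split; apply: eq_bigr => j _; rewrite !mxE /=; ring.
Qed.

Lemma sqn_entry m n (X : 'M[R]_(m, n)) i j : X i j ^+ 2 <= sqn X.
Proof.
rewrite /sqn (bigD1 i) //= (bigD1 j) //= -addrA lerDl addr_ge0 //.
  by apply: sumr_ge0 => l _; exact: sqr_ge0.
by apply: sumr_ge0 => l _; apply: sumr_ge0 => l' _; exact: sqr_ge0.
Qed.

Lemma cont_sum (T : topologicalType) (I : Type) (r : seq I) (f : I -> T -> R) :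
  (forall i, continuous (f i)) -> continuous (fun x => \sum_(i <- r) f i x).
Proof.
move=> fc; elim: r => [|a r ih].
  under eq_fun do rewrite big_nil; exact: cst_continuous.
under eq_fun do rewrite big_cons.
by move=> x; apply: continuousD; [exact: fc | exact: ih].
Qed.

Lemma cont_sqn (T : topologicalType) a b (f : T -> 'M[R]_(a, b)) :
  (forall i j, continuous (fun x => f x i j)) -> continuous (fun x => sqn (f x)).
Proof.
move=> fc; rewrite /sqn; apply: cont_sum => i; apply: cont_sum => j.
under eq_fun do rewrite expr2.
by move=> x; apply: continuousM; exact: fc.
Qed.

Lemma cont_mul k l (P : 'M[R]_(k, l)) i j :
  continuous (fun v : 'rV[R]_k => (v *m P) i j).
Proof.
under eq_fun do rewrite mxE.
apply: cont_sum => q x; apply: continuousM; first exact: coord_continuous.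
exact: cst_continuous.
Qed.


Lemma sqn_const k : sqn (const_mx 1 : 'rV[R]_k.+1) = k.+1%:R.
Proof.
rewrite /sqn big_ord1; under eq_bigr do rewrite mxE expr1n.
by rewrite sumr_const card_ord.
Qed.

Lemma sqn_scale k (v : 'rV[R]_k) : sqn v != 0 ->
  sqn ((Num.sqrt (sqn v))^-1 *: v) = 1.
Proof.
move=> nz; rewrite sqnZ exprVn sqr_sqrtr ?sqn_ge0 // mulVf //.
Qed.

Lemma rayleigh m (P : 'M[R]_(m.+1)) : exists mu,
  eigenvalue (P *m P^T) mu /\ forall v : 'rV[R]_m.+1, mu * sqn v <= sqn (v *m P).
Proof.
set S := [set v : 'rV[R]_m.+1 | sqn v = 1]%classic.
have S0 : (S !=set0)%classic.
  exists ((Num.sqrt (sqn (const_mx 1 : 'rV[R]_m.+1)))^-1 *: const_mx 1).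
  by rewrite /S /= sqn_scale // sqn_const pnatr_eq0.
have Sc : compact S.
  apply: bounded_closed_compact.
    rewrite /bounded_set /bounded_near /=.
    exists 1; split => // M M1 v Sv /=.
    rewrite [X in X <= _]/Num.Def.normr /= mx_normrE.
    apply: le_trans (ltW M1); apply: bigmax_le => // -[i j] _ /=.
    rewrite -(@ler_sqr _ _ 1) ?nnegrE // real_normK ?num_real // expr1n.
    by rewrite -Sv; exact: sqn_entry.
  apply: (@preimage_closed _ _ (fun v : 'rV[R]_m.+1 => sqn v) [set x | x = 1]%classic).
    by move=> v _; apply: cont_sqn => i j; exact: coord_continuous.
  exact: closed_eq.
have gc : continuous (fun v : 'rV[R]_m.+1 => sqn (v *m P)).
  by apply: cont_sqn => i j; exact: cont_mul.
have gcS : {within S, continuous (fun v : 'rV[R]_m.+1 => sqn (v *m P))}%classic.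
  by apply: continuous_subspaceT.
have [v0 v0S v0min] := compact_EVT_min S0 Sc gcS.
have sv0 : sqn v0 = 1 by move: v0S; rewrite inE.
set mu := sqn (v0 *m P).
have Hray : forall v : 'rV[R]_m.+1, mu * sqn v <= sqn (v *m P).
  move=> v; have [z|nz] := eqVneq (sqn v) 0.
    by rewrite z mulr0 sqn_ge0.
  have := v0min _ (mem_set (sqn_scale nz)).
  rewrite -scalemxAl sqnZ exprVn sqr_sqrtr ?sqn_ge0 // mulrC -/mu.
  by rewrite ler_pdivlMr // lt_def nz sqn_ge0.
exists mu; split => //.
apply/eigenvalueP; exists v0; last first.
  by apply/eqP => v00; move: sv0; rewrite v00 sqn0 => /eqP; rewrite eq_sym oner_eq0.
set Y := v0 *m (P *m P^T) - mu *: v0.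
have key w : ip Y w = 0.
  have eqY : ip Y w = ip (v0 *m P) (w *m P) - mu * ip v0 w.
    by rewrite /Y ipB ipZ ip_mul mulmxA.
  rewrite eqY; apply: (@quad0 _ (sqn (w *m P) - mu * sqn w)) => t.
  have := Hray (v0 + t *: w).
  rewrite mulmxDl -scalemxAl !sqn_ip !ip_sq -!sqn_ip sv0 -/mu.
  have := Hray w; lra.
apply/eqP; rewrite -subr_eq0 -/Y; apply/eqP/rowP => j.
by rewrite -ip_delta key mxE.
Qed.


Lemma sqn_gt0 m n (X : 'M[R]_(m, n)) : X != 0 -> 0 < sqn X.
Proof.
move=> nz; rewrite lt_def sqn_ge0 andbT; apply/eqP => /sqn_eq0 h.
by rewrite h eqxx in nz.
Qed.

Lemma eig_ge0 k (P : 'M[R]_k) mu : eigenvalue (P *m P^T) mu -> 0 <= mu.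
Proof.
case/eigenvalueP => v hv nz.
have e : sqn (v *m P) = mu * sqn v.
  by rewrite !sqn_ip ip_mul -mulmxA hv ipZ.
by rewrite -(pmulr_lge0 _ (sqn_gt0 nz)) -e sqn_ge0.
Qed.

Lemma eig_transfer k (D : 'M[R]_k) mu :
  eigenvalue (D *m D^T) mu -> eigenvalue (D^T *m D) mu.
Proof.
case/eigenvalueP => v hv nz; apply/eigenvalueP.
have [vD|vD] := eqVneq (v *m D) 0.
  have mu0 : mu = 0.
    move: hv; rewrite mulmxA vD mul0mx => /esym/eqP.
    by rewrite scaler_eq0 (negbTE nz) orbF => /eqP.
  have : \det D^T == 0 by rewrite det_tr; apply/det0P; exists v.
  case/det0P => w wnz wD; exists w => //.
  by rewrite mulmxA wD mul0mx mu0 scale0r.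
exists (v *m D) => //.
by rewrite mulmxA -(mulmxA v) hv -scalemxAl.
Qed.

Lemma sig_le k (M : 'M[R]_k) mu : eigenvalue (M^T *m M) mu -> sigma_min M ^+ 2 <= mu.
Proof.
move=> he.
have ge0 l : eigenvalue (M^T *m M) l -> 0 <= l.
  by move=> hl; apply: (@eig_ge0 _ M^T); rewrite trmxK.
rewrite /sigma_min.
set E := [set l | eigenvalue (M^T *m M) l]%classic.
have hlb : has_lbound E by exists 0 => l; exact: ge0.
have iE : inf E <= mu by apply: ge_inf.
have [i0|i0] := leP 0 (inf E).
  by rewrite sqr_sqrtr.
by rewrite ler0_sqrtr ?(ltW i0) // expr0n /= ge0.
Qed.

Lemma col_bound k (C X : 'M[R]_(k.+1)) : sigma_min C ^+ 2 * sqn X <= sqn (C *m X).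
Proof.
have [mu [he hr]] := rayleigh C^T.
rewrite trmxK in he.
have hs := sig_le he.
apply: (@le_trans _ _ (mu * sqn X)).
  by apply: ler_wpM2r => //; exact: sqn_ge0.
rewrite -[sqn (C *m X)]sqn_tr trmx_mul -(sqn_tr X) (sqn_rows (X^T *m C^T)) sqn_rows mulr_sumr.
apply: ler_sum => i _; rewrite row_mul; exact: hr.
Qed.

Lemma row_bound k (X D : 'M[R]_(k.+1)) : sigma_min D ^+ 2 * sqn X <= sqn (X *m D).
Proof.
have [mu [he hr]] := rayleigh D.
have hs := sig_le (eig_transfer he).
apply: (@le_trans _ _ (mu * sqn X)).
  by apply: ler_wpM2r => //; exact: sqn_ge0.
rewrite (sqn_rows (X *m D)) sqn_rows mulr_sumr.
apply: ler_sum => i _; rewrite row_mul; exact: hr.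
Qed.


Lemma sqnN m n (X : 'M[R]_(m, n)) : sqn (- X) = sqn X.
Proof. by rewrite -scaleN1r sqnZ sqrrN expr1n mul1r. Qed.

Lemma norm_sqn m n (X : 'M[R]_(m, n)) : `|X| ^+ 2 <= sqn X.
Proof.
have : `|X| <= Num.sqrt (sqn X).
  rewrite [Z in Z <= _]/Num.Def.normr /= mx_normrE.
  apply: bigmax_le => [|[i j] _ /=]; first exact: sqrtr_ge0.
  rewrite -ler_sqr ?nnegrE ?sqrtr_ge0 // sqr_sqrtr ?sqn_ge0 //.
  by rewrite real_normK ?num_real // sqn_entry.
move=> h; rewrite -(sqr_sqrtr (sqn_ge0 X)) ler_sqr ?nnegrE ?sqrtr_ge0 //.
Qed.

Lemma sqn_norm m n (X : 'M[R]_(m, n)) : sqn X <= (m * n)%:R * `|X| ^+ 2.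
Proof.
have h i j : X i j ^+ 2 <= `|X| ^+ 2.
  rewrite -real_normK ?num_real // ler_sqr ?nnegrE //.
  rewrite [Z in _ <= Z]/Num.Def.normr /= mx_normrE.
  by apply/bigmax_geP; right; exists (i, j).
apply: le_trans (_ : \sum_(i < m) \sum_(j < n) `|X| ^+ 2 <= _).
  by apply: ler_sum => i _; apply: ler_sum => j _; exact: h.
by rewrite !sumr_const !card_ord -mulrnA mulr_natl mulnC.
Qed.

Lemma bernoulli (x : R) j : 1 <= x -> 1 + j%:R * (x - 1) <= x ^+ j.
Proof.
move=> x1; elim: j => [|j ih]; first by rewrite mul0r addr0 expr0.
rewrite exprS -natr1.
have x0 : 0 <= x by apply: le_trans x1.
have h1 := ler_wpM2l x0 ih.
have h2 : 0 <= j%:R * (x - 1) * (x - 1).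
  by rewrite mulr_ge0 // ?mulr_ge0 // subr_ge0.
lra.
Qed.

End Helpers.

Definition mxR (R : realType) n := 'M[R]_(n, n).
HB.instance Definition _ (R : realType) n := NormedModule.on (mxR R n).
HB.instance Definition _ (R : realType) n := Complete.on (mxR R n).

Unset Implicit Arguments.

Theorem theorem4p8 (R : realType) (n : nat) (A B K L F : 'M[R]_n)
  (hB : B \in unitmx) (hL : L \in unitmx)
  (h : sigma_min (K *m invmx L) * sigma_min (invmx B *m A) > 1) :
  exists! X : 'M[R]_n, A *m X *m K + B *m absmx X *m L = F.
Proof.
case: n A B K L F hB hL h => [|k] A B K L F hB hL h.
  exists 0; split; first by apply/matrixP => -[].
  by move=> Y _; apply/matrixP => -[].
set C := invmx B *m A.
set D := K *m invmx L.
set G := invmx B *m F *m invmx L.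
pose Phi X := C *m X *m D + absmx X.
have eqv X : (A *m X *m K + B *m absmx X *m L = F) <-> Phi X = G.
  have e : A *m X *m K + B *m absmx X *m L = B *m Phi X *m L.
    rewrite /Phi mulmxDr mulmxDl /C /D !mulmxA mulmxV // mul1mx mulmxKV //.
  rewrite e; split => [e'|->].
    by rewrite /G -e' !mulmxA mulVmx // mul1mx mulmxK.
  by rewrite /G !mulmxA mulmxV // mul1mx mulmxKV.
have hC X : sigma_min C ^+ 2 * sqn X <= sqn (C *m X) := col_bound C X.
have hD X : sigma_min D ^+ 2 * sqn X <= sqn (X *m D) := row_bound X D.
have sC0 : 0 <= sigma_min C := sqrtr_ge0 _.
have sD0 : 0 <= sigma_min D := sqrtr_ge0 _.
move: h; rewrite -/C -/D => h.
move: (sigma_min C) (sigma_min D) sC0 sD0 h hC hD => sC sD sC0 sD0 h hC hD.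
have kap1 : 1 < sC ^+ 2 * sD ^+ 2.
  rewrite -exprMn mulrC expr2; apply: (lt_trans h); rewrite ltr_pMr //.
  exact: lt_trans ltr01 h.
have bound X : sC ^+ 2 * sD ^+ 2 * sqn X <= sqn (C *m X *m D).
  rewrite -mulmxA -mulrA; apply: le_trans (hC _); apply: ler_wpM2l.
    exact: sqr_ge0.
  exact: hD.
move: (sC ^+ 2 * sD ^+ 2) bound kap1 => kap bound kap1.
clear hC hD h sC0 sD0 sC sD.
have kap0 : 0 < kap by exact: lt_trans ltr01 kap1.
have ineq X Y : C *m (X - Y) *m D = absmx Y - absmx X -> X = Y.
  move=> e; have h2 := bound (X - Y); rewrite e in h2.
  have h1 : sqn (absmx Y - absmx X) <= sqn (X - Y).
    by rewrite -[X - Y]opprB sqnN sqn_absB.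
  have h3 : sqn (X - Y) <= 0.
    have h4 : (kap - 1) * sqn (X - Y) <= 0.
      by rewrite mulrBl mul1r subr_le0; exact: le_trans h2 h1.
    by move: h4; rewrite pmulr_rle0 // subr_gt0.
  have : sqn (X - Y) = 0 by apply/eqP; rewrite eq_le h3 sqn_ge0.
  by move/sqn_eq0/eqP; rewrite subr_eq0 => /eqP.
have inj X Y : Phi X = Phi Y -> X = Y.
  move=> e; apply: ineq; rewrite mulmxBr mulmxBl.
  have -> : C *m X *m D = C *m Y *m D + absmx Y - absmx X.
    by move: e; rewrite /Phi => <-; rewrite addrK.
  by rewrite [LHS]addrAC (addrC (C *m Y *m D)) addrK.
have Cu : C \in unitmx.
  rewrite unitmxE unitfE -det_tr; apply/negP => /det0P [v vnz vC].
  pose X := \matrix_(i, j) v 0 i : 'M[R]_k.+1.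
  have CX : C *m X = 0.
    apply/matrixP => i j.
    have e := congr1 (fun M : 'rV[R]_k.+1 => M 0 i) vC.
    rewrite /= [in RHS]mxE in e.
    rewrite [RHS]mxE -[RHS]e !mxE.
    by apply: eq_bigr => l _; rewrite !mxE mulrC.
  have Xnz : X != 0.
    apply/eqP => X0; apply: (negP vnz); apply/eqP/rowP => i.
    by have := congr1 (fun M : 'M[R]_k.+1 => M i ord0) X0; rewrite !mxE.
  have := bound X; rewrite CX mul0mx sqn0 pmulr_rle0 //.
  by rewrite leNgt sqn_gt0.
have Du : D \in unitmx.
  rewrite unitmxE unitfE; apply/negP => /det0P [v vnz vD].
  pose X := \matrix_(i, j) v 0 j : 'M[R]_k.+1.
  have XD : X *m D = 0.
    apply/matrixP => i j.
    have e := congr1 (fun M : 'rV[R]_k.+1 => M 0 j) vD.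
    rewrite /= [in RHS]mxE in e.
    rewrite [RHS]mxE -[RHS]e !mxE.
    by apply: eq_bigr => l _; rewrite !mxE.
  have Xnz : X != 0.
    apply/eqP => X0; apply: (negP vnz); apply/eqP/rowP => i.
    by have := congr1 (fun M : 'M[R]_k.+1 => M ord0 i) X0; rewrite !mxE.
  have := bound X; rewrite -mulmxA XD mulmx0 sqn0 pmulr_rle0 //.
  by rewrite leNgt sqn_gt0.
pose T X := invmx C *m (G - absmx X) *m invmx D.
have CTD X : C *m T X *m D = G - absmx X.
  by rewrite /T !mulmxA mulmxV // mul1mx -mulmxA -/D mulmxKV.
have fixG X : T X = X -> Phi X = G.
  by move=> e; rewrite /Phi -{1}e CTD subrK.
have contr X Y : kap * sqn (T X - T Y) <= sqn (X - Y).
  have e : C *m (T X - T Y) *m D = absmx Y - absmx X.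
    by rewrite mulmxBr mulmxBl !CTD opprB addrC addrA subrK.
  have := bound (T X - T Y); rewrite e => hb; apply: le_trans hb _.
  by rewrite -[X - Y]opprB sqnN sqn_absB.
have iterc j X Y : kap ^+ j * sqn (iter j T X - iter j T Y) <= sqn (X - Y).
  elim: j => [|j ih]; first by rewrite expr0 mul1r.
  rewrite exprSr -mulrA /=; apply: le_trans ih; apply: ler_wpM2l.
    exact: exprn_ge0 (ltW kap0).
  exact: contr.
pose N : R := (k.+1 * k.+1)%:R.
have N1 : 1 <= N by rewrite /N ler1n muln_gt0.
have [j hj] : exists j : nat, 4 * N / (kap - 1) < j%:R.
  exists (Num.Def.archi_bound (4 * N / (kap - 1))); apply: archi_boundP.
  by rewrite divr_ge0 // ?subr_ge0 ?(ltW kap1) // mulr_ge0 // (le_trans ler01 N1).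
have hkj : 4 * N <= kap ^+ j.
  move: hj; rewrite ltr_pdivrMr ?subr_gt0 // => hj.
  apply: le_trans (bernoulli j (ltW kap1)).
  by apply: le_trans (ltW hj) _; rewrite lerDr.
pose f : mxR R k.+1 -> mxR R k.+1 := iter j T.
have lip X Y : `|f X - f Y| <= 2^-1 * `|X - Y|.
  have a1 := norm_sqn (f X - f Y).
  have a2 := iterc j X Y.
  have a3 := sqn_norm (X - Y).
  have s0 := sqn_ge0 (f X - f Y).
  have b1 : N * (4 * sqn (f X - f Y)) <= N * `|X - Y| ^+ 2.
    rewrite mulrA [N * 4]mulrC; apply: le_trans (ler_wpM2r s0 hkj) _.
    exact: le_trans a2 a3.
  rewrite ler_pM2l ?(lt_le_trans ltr01 N1) // in b1.
  rewrite -ler_sqr ?nnegrE ?mulr_ge0 ?invr_ge0 // exprMn.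
  lra.
have ctr : contraction (2^-1 : R)%:nng (totalfun f : {fun setT >-> setT}).
  split; first by rewrite /=; lra.
  by move=> [X Y] _ /=; exact: lip.
have ic : is_contraction (totalfun f : {fun setT >-> setT}) by exists (2^-1 : R)%:nng.
have [p _ pf] := @banach_fixed_point R (mxR R k.+1) setT (totalfun f) ic closedT (ex_intro _ 0 I).
have {}pf : p = f p := pf.
have fTp : f (T p) = T p.
  by rewrite /f -iterSr iterS -/(f p) -pf.
have Tp : T p = p.
  have := iterc j (T p) p; rewrite -/(f (T p)) -/(f p) fTp -pf => hb.
  have h3 : sqn (T p - p) <= 0.
    have h4 : (kap ^+ j - 1) * sqn (T p - p) <= 0.
      by rewrite mulrBl mul1r subr_le0.
    move: h4; rewrite pmulr_rle0 // subr_gt0.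
    apply: lt_le_trans hkj; have := N1; lra.
  have : sqn (T p - p) = 0 by apply/eqP; rewrite eq_le h3 sqn_ge0.
  by move/sqn_eq0/eqP; rewrite subr_eq0 => /eqP.
exists p; split; first by apply/eqv; exact: fixG.
by move=> Y /eqv hY; apply: inj; rewrite hY fixG.
Qed.
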